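(* Let $r\geq2$ and let $\mathcal{K}$ be the class of finite $r$-uniform hypergraphs. Let $e\subseteq\mathbf{B}\in\mathcal{K}$, where $e$ is the hypergraph on $r$ vertices consisting of a single edge, and let $\mathbf{C}\in\mathcal{K}$ with $|\mathbf{C}|=N$. Then there is $\mathbf{D}\in\mathcal{K}$ extending $\mathbf{C}$ along $e\subseteq\mathbf{B}$ with $|\mathbf{D}|\leq cN^{r-1}$, where $c$ is a constant depending only on $|\mathbf{B}|$ (for the fixed $r$).
   Context: For $\mathbf{A}\subseteq\mathbf{B}$ and $\mathbf{C}\subseteq\mathbf{D}$ in $\mathcal{K}$ (induced substructures), $\mathbf{D}$ extends $\mathbf{C}$ along $\mathbf{A}\subseteq\mathbf{B}$ if $\mathbf{C}$ is a substructure of $\mathbf{D}$ and for every embedding $f:\mathbf{A}\to\mathbf{C}$ there is an embedding $h:\mathbf{B}\to\mathbf{D}$ with $h|_{\mathbf{A}}=f$. $|\mathbf{C}|$ is the number of vertices. *)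

(* Defs.v *)
From mathcomp Require Import all_boot.
Set Implicit Arguments. Unset Strict Implicit. Unset Printing Implicit Defensive.

(* A finite r-uniform hypergraph with n vertices is represented by its
   vertex type 'I_n and its edge set E : {set {set 'I_n}} with all edges of size r. *)
Definition uniform (r n : nat) (E : {set {set 'I_n}}) : Prop :=
  forall S, S \in E -> #|S| = r.

(* Embedding (= isomorphism onto an induced substructure). *)
Definition is_emb (m n : nat) (E1 : {set {set 'I_m}}) (E2 : {set {set 'I_n}})
  (f : 'I_m -> 'I_n) : Prop :=
  injective f /\ forall S : {set 'I_m}, (S \in E1) = (f @: S \in E2).

Definition single_edge (r : nat) : {set {set 'I_r}} := [set [set: 'I_r]].

Definition extends_along (a b c d : nat)
  (EA : {set {set 'I_a}}) (EB : {set {set 'I_b}})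
  (EC : {set {set 'I_c}}) (ED : {set {set 'I_d}})
  (i : 'I_a -> 'I_b) (j : 'I_c -> 'I_d) : Prop :=
  forall f : 'I_a -> 'I_c, is_emb EA EC f ->
    exists h : 'I_b -> 'I_d, is_emb EB ED h /\ forall x, h (i x) = j (f x).

(* Main.v *)
Require Import Defs.
From mathcomp Require Import all_boot.
Set Implicit Arguments. Unset Strict Implicit. Unset Printing Implicit Defensive.

Definition embT (A B : finType) (E1 : {set {set A}}) (E2 : {set {set B}}) (f : A -> B) :=
  injective f /\ forall S : {set A}, (S \in E1) = (f @: S \in E2).

Definition pre n b (i : 'I_n.+1 -> 'I_b) (y : 'I_b) := [pick x | i x == y].
Definition key n N (f : {ffun 'I_n.+1 -> 'I_N}) : {ffun 'I_n -> 'I_N} :=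
  [ffun k => f (lift ord_max k)].
Definition V n N b := ('I_N + ({ffun 'I_n -> 'I_N} * 'I_b))%type.
Definition hh n N b (i : 'I_n.+1 -> 'I_b) (f : {ffun 'I_n.+1 -> 'I_N}) (y : 'I_b) : V n N b :=
  if pre i y is Some x then inl (f x) else inr (key f, y).
Definition good n N (EC : {set {set 'I_N}}) (f : {ffun 'I_n.+1 -> 'I_N}) :=
  injectiveb f && (f @: setT \in EC).
Definition EDV n N b (EC : {set {set 'I_N}}) (EB : {set {set 'I_b}}) (i : 'I_n.+1 -> 'I_b)
  : {set {set V n N b}} :=
  [set S | [exists S0 : {set 'I_N}, (S0 \in EC) && (S == inl @: S0)] ||
           [exists f, [exists T : {set 'I_b}, [&& T \in EB, good EC f & S == hh i f @: T]]]].

Lemma pre_i n b (i : 'I_n.+1 -> 'I_b) x : injective i -> pre i (i x) = Some x.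
Proof.
move=> ii; rewrite /pre; case: pickP => [x' /eqP /ii -> //|/(_ x)]; by rewrite eqxx.
Qed.

Lemma pre_some n b (i : 'I_n.+1 -> 'I_b) y x : pre i y = Some x -> y = i x.
Proof. by rewrite /pre; case: pickP => // x' /eqP <- [->]. Qed.

Lemma hh_i n (N : nat) b (i : 'I_n.+1 -> 'I_b) (f : {ffun 'I_n.+1 -> 'I_N}) x : injective i -> hh i f (i x) = inl (f x).
Proof. by move=> ii; rewrite /hh pre_i. Qed.

Lemma hh_inj n N b (i : 'I_n.+1 -> 'I_b) (f : {ffun 'I_n.+1 -> 'I_N}) :
  injective f -> injective (hh i f).
Proof.
move=> fi y1 y2; rewrite /hh.
case E1: (pre i y1) => [x1|]; case E2: (pre i y2) => [x2|] //.
- by move=> [/fi e]; rewrite (pre_some E1) (pre_some E2) e.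
- by move=> [].
Qed.

Lemma inl_inj' (A B : Type) : injective (@inl A B).
Proof. by move=> x y []. Qed.

Lemma range_sub n b (i : 'I_n.+1 -> 'I_b) (S : {set 'I_b}) :
  (forall y, y \in S -> pre i y != None) -> S \subset i @: setT.
Proof.
move=> H; apply/subsetP => y /H; case E: (pre i y) => [x|] // _.
by rewrite (pre_some E) imset_f.
Qed.

Lemma range_eq n b (i : 'I_n.+1 -> 'I_b) (S : {set 'I_b}) :
  injective i -> S \subset i @: setT -> #|S| = n.+1 -> S = i @: setT.
Proof.
move=> ii sS cS; apply/eqP; rewrite eqEcard sS /=. rewrite card_imset //. rewrite cardsT card_ord cS. by [].
Qed.

Lemma hh_range n N b (i : 'I_n.+1 -> 'I_b) (f : {ffun 'I_n.+1 -> 'I_N}) :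
  injective i -> hh i f @: (i @: setT) = inl @: (f @: setT).
Proof. by move=> ii; rewrite -!imset_comp; apply: eq_imset => x /=; rewrite hh_i. Qed.

Lemma hh_notnew n N b (i : 'I_n.+1 -> 'I_b) (f : {ffun 'I_n.+1 -> 'I_N}) y z :
  hh i f y = inl z -> pre i y != None.
Proof. by rewrite /hh; case: (pre i y). Qed.

Lemma good_inj n N EC (f : {ffun 'I_n.+1 -> 'I_N}) : good EC f -> injective f.
Proof. by case/andP => /injectiveP. Qed.

Lemma EDV_unif n N b (EC : {set {set 'I_N}}) (EB : {set {set 'I_b}}) (i : 'I_n.+1 -> 'I_b) :
  (forall S, S \in EC -> #|S| = n.+1) -> (forall S, S \in EB -> #|S| = n.+1) ->
  forall S, S \in EDV EC EB i -> #|S| = n.+1.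
Proof.
move=> uC uB S; rewrite inE => /orP [/existsP [S0 /andP [S0C /eqP ->]]|].
  by rewrite card_imset ?uC //; apply: inl_inj'.
case/existsP => f /existsP [T /and3P [TB gf /eqP ->]].
by rewrite card_imset ?uB //; apply: hh_inj; apply: good_inj gf.
Qed.

Lemma j_emb n N b (EC : {set {set 'I_N}}) (EB : {set {set 'I_b}}) (i : 'I_n.+1 -> 'I_b) :
  injective i -> (forall S, S \in EB -> #|S| = n.+1) ->
  embT EC (EDV EC EB i) inl.
Proof.
move=> ii uB; split; first exact: inl_inj'.
move=> S; apply/idP/idP => [SC|].
  by rewrite inE; apply/orP; left; apply/existsP; exists S; rewrite SC eqxx.
rewrite inE => /orP [/existsP [S0 /andP [S0C /eqP /imset_inj e]]|].
  by rewrite e //; apply: inl_inj'.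
case/existsP => f /existsP [T /and3P [TB gf /eqP e]].
have sT : T \subset i @: setT.
  apply: range_sub => y yT.
  have : hh i f y \in inl @: S by rewrite e imset_f.
  by case/imsetP => z _ /hh_notnew.
move: e; rewrite (range_eq ii sT (uB _ TB)) hh_range // => /imset_inj -> //.
  by case/andP: gf.
exact: inl_inj'.
Qed.

Lemma notmax n N b (i : 'I_n.+1 -> 'I_b) (F f : {ffun 'I_n.+1 -> 'I_N}) (S T : {set 'I_b}) :
  injective i -> injective F -> key F = key f -> F ord_max != f ord_max ->
  hh i F @: S = hh i f @: T -> i ord_max \notin S.
Proof.
move=> ii Fi ek emax e; apply/negP => imS.
have : hh i F (i ord_max) \in hh i f @: T by rewrite -e imset_f.
rewrite hh_i //; case/imsetP => y2 _; rewrite /hh; case E2: (pre i y2) => [x2|] // [ex].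
case: (unliftP ord_max x2) => [k ek2|ek2]; subst x2.
  move: ex; move/(congr1 (fun g : {ffun 'I_n -> 'I_N} => g k)): ek; rewrite !ffunE => <- /Fi.
  by move/eqP; rewrite (negbTE (neq_lift _ _)).
by rewrite ex eqxx in emax.
Qed.

Lemma h_emb n N b (EC : {set {set 'I_N}}) (EB : {set {set 'I_b}}) (i : 'I_n.+1 -> 'I_b)
  (F : {ffun 'I_n.+1 -> 'I_N}) :
  injective i -> i @: setT \in EB ->
  (forall S, S \in EC -> #|S| = n.+1) -> (forall S, S \in EB -> #|S| = n.+1) ->
  good EC F -> embT EB (EDV EC EB i) (hh i F).
Proof.
move=> ii iEB uC uB gF; have Fi := good_inj gF; split; first exact: hh_inj.
move=> S; apply/idP/idP => [SB|].
  rewrite inE; apply/orP; right; apply/existsP; exists F; apply/existsP; exists S.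
  by rewrite SB gF eqxx.
rewrite inE => /orP [/existsP [S0 /andP [S0C /eqP e]]|].
  have sS : S \subset i @: setT.
    apply: range_sub => y yS.
    have : hh i F y \in inl @: S0 by rewrite -e imset_f.
    by case/imsetP => z _ /hh_notnew.
  have cS : #|S| = n.+1.
    rewrite -(card_imset S (hh_inj (i:=i) Fi)) e card_imset ?uC //; exact: inl_inj'.
  by rewrite (range_eq ii sS cS).
case/existsP => f /existsP [T /and3P [TB gf /eqP e]].
have fi := good_inj gf.
have cS : #|S| = n.+1.
  by rewrite -(card_imset S (hh_inj (i:=i) Fi)) e card_imset ?uB //; apply: hh_inj.
case: (boolP [exists y in S, pre i y == None]); last first.
  move=> /existsP nE.
  have sS : S \subset i @: setT.
    apply: range_sub => y yS; apply/negP => /eqP py; apply: nE; exists y.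
    by rewrite yS py eqxx.
  by rewrite (range_eq ii sS cS).
case/existsP => y /andP [yS /eqP py].
have : hh i F y \in hh i f @: T by rewrite -e imset_f.
case/imsetP => y' y'T; rewrite {1}/hh py /hh.
case E': (pre i y') => [x'|] // [ek ey].
case: (eqVneq (F ord_max) (f ord_max)) => emax.
  have fF : f = F.
    apply/ffunP => x; case: (unliftP ord_max x) => [k ->|->] //.
    by move/(congr1 (fun g : {ffun 'I_n -> 'I_N} => g k)): ek; rewrite !ffunE.
  by move: e; rewrite fF => /imset_inj -> //; apply: hh_inj.
have nS := notmax ii Fi ek emax e.
have nT : i ord_max \notin T.
  by apply: (notmax ii fi (esym ek)) (esym e); rewrite eq_sym.
have eT : hh i F @: T = hh i f @: T.
  apply: eq_in_imset => y2 y2T; rewrite /hh; case E2: (pre i y2) => [x2|]; last by rewrite ek.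
  rewrite (pre_some E2) in y2T.
  case: (unliftP ord_max x2) => [k ek2|ek2]; subst x2.
    by move/(congr1 (fun g : {ffun 'I_n -> 'I_N} => g k)): ek; rewrite !ffunE => ->.
  by rewrite y2T in nT.
by move: e; rewrite -eT => /imset_inj -> //; apply: hh_inj.
Qed.

Lemma memED (W : finType) (E2 : {set {set W}}) (X : {set W}) :
  ((@enum_rank W) @: X \in [set (@enum_rank W) @: S | S : {set W} in E2]) = (X \in E2).
Proof. by rewrite (mem_imset _ _ (imset_inj (@enum_rank_inj W))). Qed.

Lemma transport (A W : finType) (E1 : {set {set A}}) (E2 : {set {set W}}) (k : A -> W) :
  embT E1 E2 k -> embT E1 [set (@enum_rank W) @: S | S : {set W} in E2] ((@enum_rank W) \o k).
Proof.
case=> ki kS; split; first by apply: inj_comp => //; apply: enum_rank_inj.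
by move=> S; rewrite imset_comp memED kS.
Qed.

Theorem mainTheorem19 :
  forall r : nat, 2 <= r ->
  forall b : nat, exists c : nat,
  forall (EB : {set {set 'I_b}}), uniform r EB ->
  forall i : 'I_r -> 'I_b, is_emb (single_edge r) EB i ->
  forall (N : nat) (EC : {set {set 'I_N}}), uniform r EC ->
  exists (d : nat) (ED : {set {set 'I_d}}) (j : 'I_N -> 'I_d),
    [/\ uniform r ED, is_emb EC ED j,
        extends_along (single_edge r) EB EC ED i j
      & d <= c * N ^ (r - 1)].
Proof.
case=> [//|n] n1 b; exists b.+1 => EB uB i [ii iS] N EC uC.
have iEB : i @: setT \in EB by rewrite -iS /single_edge in_set1.
pose W := V n N b.
exists #|{: W}|, [set (@enum_rank W) @: S | S : {set W} in EDV EC EB i],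
  ((@enum_rank W) \o inl).
split.
- move=> S /imsetP [S' S'in ->]. rewrite card_imset; last exact: enum_rank_inj. idtac.
  move: S'in; apply: EDV_unif => //.
- exact: (transport (j_emb EC ii uB)).
- move=> f [fi fS].
  pose F : {ffun 'I_n.+1 -> 'I_N} := [ffun x => f x].
  have eF : F @: setT = f @: setT by apply: eq_imset => x; rewrite ffunE.
  have gF : good EC F.
    rewrite /good eF -fS /single_edge in_set1 eqxx andbT.
    by apply/injectiveP => x y; rewrite !ffunE; apply: fi.
  exists ((@enum_rank W) \o hh i F); split.
    exact: (transport (h_emb ii iEB uC uB gF)).
  by move=> x /=; rewrite hh_i // ffunE.
- rewrite card_sum card_prod card_ffun !card_ord subn1 /=.
  rewrite mulSn [b * _]mulnC leq_add2r; clear -n1; case: N => // N.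
  by rewrite -{1}(expn1 N.+1) leq_pexp2l.
Qed.
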